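(* Consider an $\mathsf n$-qubit system in which CNOT (and SWAP) gates can be applied only to pairs of qubits forming edges of a given connected undirected simple graph on the qubits. Then for any non-identity $\mathsf n$-qubit Pauli operator $P$ and any $\theta\in\mathbb R$, the unitary $e^{\mathrm i\frac\theta2P}$ can be implemented using one single-qubit rotation $e^{\mathrm i\frac\theta2\sigma^x}$, at most $2\mathsf n$ single-qubit Hadamard and Phase gates, and at most $2\mathsf n-2$ CNOT and SWAP gates (each on an edge of the graph).
   Context: A non-identity $\mathsf n$-qubit Pauli operator is a tensor product of $\mathbf 1_2,\sigma^x,\sigma^y,\sigma^z$ other than the identity. *)

(* Defs.v *)
From HB Require Import structures.
From mathcomp Require Import all_boot all_order all_algebra.
From mathcomp Require Import reals trigo.
From mathcomp Require Import complex.
Set Implicit Arguments. Unset Strict Implicit. Unset Printing Implicit Defensive.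
Import Order.TTheory GRing.Theory Num.Theory.
Local Open Scope ring_scope.

Section Qubits.
Variable R : realType.
Local Notation C := (R[i]).

(* k-th bit (qubit k) of the computational-basis index i *)
Definition bit (i k : nat) : bool := odd (i %/ 2 ^ k).

Definition op1 := bool -> bool -> C.
(* two-qubit operators: entry (out_a, out_b) (in_a, in_b) *)
Definition op2 := bool -> bool -> bool -> bool -> C.

Definition embed1 (n : nat) (k : 'I_n) (G : op1) : 'M[C]_(2 ^ n) :=
  \matrix_(i, j) (if [forall l : 'I_n, (l != k) ==> (bit i l == bit j l)]
                  then G (bit i k) (bit j k) else 0).

Definition embed2 (n : nat) (a b : 'I_n) (G : op2) : 'M[C]_(2 ^ n) :=
  \matrix_(i, j) (if [forall l : 'I_n, ((l != a) && (l != b)) ==> (bit i l == bit j l)]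
                  then G (bit i a) (bit i b) (bit j a) (bit j b) else 0).

Definition ci : C := Complex 0 1.
Definition rc (x : R) : C := Complex x 0.

Definition b2C (b : bool) : C := if b then 1 else 0.

Definition sigma0 : op1 := fun x y => b2C (x == y).
Definition sigmax : op1 := fun x y => b2C (x != y).
Definition sigmay : op1 := fun x y =>
  if x == y then 0 else if x then ci else - ci.
Definition sigmaz : op1 := fun x y =>
  if x == y then (if x then -1 else 1) else 0.

Definition hadamard : op1 := fun x y =>
  rc ((Num.sqrt (2 : R))^-1) * (if x && y then -1 else 1).
Definition phaseS : op1 := fun x y => if x == y then (if x then ci else 1) else 0.
Definition phaseSdg : op1 := fun x y => if x == y then (if x then - ci else 1) else 0.

(* e^{i theta/2 sigma^x} = cos(theta/2) 1 + i sin(theta/2) sigma^x *)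
Definition rotx (theta : R) : op1 := fun x y =>
  if x == y then rc (cos (theta / 2)) else ci * rc (sin (theta / 2)).

(* CNOT with control a (first) and target b (second) *)
Definition cnot : op2 := fun oa ob ia ib => b2C ((oa == ia) && (ob == (ib (+) ia))).
Definition swap : op2 := fun oa ob ia ib => b2C ((oa == ib) && (ob == ia)).

Inductive pauli := PI | PX | PY | PZ.
Definition pauli_eqb (p q : pauli) : bool :=
  match p, q with PI, PI | PX, PX | PY, PY | PZ, PZ => true | _, _ => false end.
Lemma pauli_eqP : Equality.axiom pauli_eqb.
Proof. by case; case; constructor. Qed.
HB.instance Definition _ := hasDecEq.Build pauli pauli_eqP.

Definition pauli_op (s : pauli) : op1 :=
  match s with PI => sigma0 | PX => sigmax | PY => sigmay | PZ => sigmaz end.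

Definition pauli_mx (n : nat) (p : 'I_n -> pauli) : 'M[C]_(2 ^ n) :=
  \matrix_(i, j) \prod_(k < n) pauli_op (p k) (bit i k) (bit j k).

Definition nonidentity_pauli (n : nat) (p : 'I_n -> pauli) : Prop :=
  exists k : 'I_n, p k != PI.

(* e^{i theta/2 P} for an involutive (Pauli) operator P, P^2 = 1 *)
Definition exp_pauli (n : nat) (theta : R) (P : 'M[C]_(2 ^ n)) : 'M[C]_(2 ^ n) :=
  rc (cos (theta / 2)) *: 1%:M + (ci * rc (sin (theta / 2))) *: P.

Inductive gate (n : nat) :=
| GH of 'I_n
| GS of 'I_n
| GSdg of 'I_n
| GRx of 'I_n
| GCNOT of 'I_n & 'I_n (* control, target *)
| GSWAP of 'I_n & 'I_n.

Definition gate_mx (n : nat) (theta : R) (g : gate n) : 'M[C]_(2 ^ n) :=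
  match g with
  | GH k => embed1 k hadamard
  | GS k => embed1 k phaseS
  | GSdg k => embed1 k phaseSdg
  | GRx k => embed1 k (rotx theta)
  | GCNOT a b => embed2 a b cnot
  | GSWAP a b => embed2 a b swap
  end.

(* circuit: gates applied in list order (first element applied first) *)
Definition circuit_mx (n : nat) (theta : R) (c : seq (gate n)) : 'M[C]_(2 ^ n) :=
  foldl (fun M g => gate_mx theta g *m M) 1%:M c.

Definition is_rot (n : nat) (g : gate n) : bool :=
  if g is GRx _ then true else false.
Definition is_HS (n : nat) (g : gate n) : bool :=
  match g with GH _ | GS _ | GSdg _ => true | _ => false end.
Definition is_2q (n : nat) (g : gate n) : bool :=
  match g with GCNOT _ _ | GSWAP _ _ => true | _ => false end.

Definition gate_respects (n : nat) (e : rel 'I_n) (g : gate n) : bool :=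
  match g with GCNOT a b | GSWAP a b => e a b | _ => true end.

End Qubits.

(* Main.v *)
Require Import Defs.
From HB Require Import structures.
From mathcomp Require Import all_boot all_order all_algebra.
From mathcomp Require Import reals trigo complex.
Import Order.TTheory GRing.Theory Num.Theory.
Local Open Scope ring_scope.
Set Implicit Arguments. Unset Strict Implicit. Unset Printing Implicit Defensive.

Lemma bit_inj_nat (n i j : nat) : (i < 2 ^ n)%N -> (j < 2 ^ n)%N ->
  (forall k, (k < n)%N -> bit i k = bit j k) -> i = j.
Proof.
elim: n i j => [|n IH] i j.
  by rewrite expn0 !ltnS !leqn0 => /eqP -> /eqP ->.
move=> hi hj hb.
rewrite -(odd_double_half i) -(odd_double_half j).
have h0 := hb 0%N isT; rewrite /bit !expn0 !divn1 in h0.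
rewrite h0; congr (_ + _)%N; congr (_.*2).
apply: IH.
- by rewrite -divn2 ltn_divLR // -expnSr.
- by rewrite -divn2 ltn_divLR // -expnSr.
move=> k hk; have := hb k.+1 hk. idtac.
by rewrite /bit expnS !divnMA !divn2.
Qed.

Section C.
Variable R : realType.
Lemma rcM (x y : R) : rc x * rc y = rc (x * y).
Proof. rewrite /rc. change ((x%:C * y%:C)%C = (x * y)%:C%C). by rewrite rmorphM. Qed.
Lemma rcD (x y : R) : rc x + rc y = rc (x + y).
Proof. rewrite /rc. change ((x%:C + y%:C)%C = (x + y)%:C%C). by rewrite rmorphD. Qed.
Lemma rc1 : rc (1 : R) = 1. Proof. by []. Qed.
Lemma hh : rc ((Num.sqrt (2:R))^-1) * rc ((Num.sqrt (2:R))^-1) + rc ((Num.sqrt (2:R))^-1) * rc ((Num.sqrt (2:R))^-1) = 1.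
Proof.
rewrite rcM rcD -rc1; congr rc.
rewrite -invfM -expr2 sqr_sqrtr ?ler0n //.
by rewrite -mulr2n -(mulr_natl (2^-1 : R) 2) mulfV // pnatr_eq0.
Qed.
Lemma cici : ci R * ci R = -1.
Proof. by rewrite -expr2 sqr_i. Qed.
Lemma HXH x y : \sum_(z:bool) (\sum_(w:bool) hadamard R x w * sigmax R w z) * hadamard R z y = sigmaz R x y.
Proof.
move: (hh); set h := rc _ => hh.
rewrite !big_bool /hadamard -/h /sigmax /sigmaz /b2C.
case: x; case: y => /=; rewrite ?mulr1 ?mul1r ?mulr0 ?mul0r ?addr0 ?add0r ?mulrN ?mulNr ?opprK.
all: rewrite ?mulr1 ?mul1r ?mulrA; try rewrite -opprD; by rewrite ?hh ?subrr ?addNr ?addrN.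
Qed.

Lemma HH x y : \sum_(z:bool) hadamard R x z * hadamard R z y = sigma0 R x y.
Proof.
move: (hh); set h := rc _ => hh.
rewrite !big_bool /hadamard -/h /sigma0 /b2C.
case: x; case: y => /=; rewrite ?mulr1 ?mul1r ?mulr0 ?mul0r ?addr0 ?add0r ?mulrN ?mulNr ?opprK.
all: rewrite ?mulr1 ?mul1r ?mulrA; try rewrite -opprD; by rewrite ?hh ?subrr ?addNr ?addrN.
Qed.

Lemma SXSdg x y : \sum_(z:bool) (\sum_(w:bool) phaseS R x w * sigmax R w z) * phaseSdg R z y = sigmay R x y.
Proof.
rewrite !big_bool /phaseS /phaseSdg /sigmax /sigmay /b2C.
case: x; case: y => /=; by rewrite ?mulr1 ?mul1r ?mulr0 ?mul0r ?addr0 ?add0r ?mulrN ?mulNr ?opprK ?mul0r ?mul1r ?oppr0.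
Qed.

Lemma SSdg x y : \sum_(z:bool) phaseS R x z * phaseSdg R z y = sigma0 R x y.
Proof.
rewrite !big_bool /phaseS /phaseSdg /sigma0 /b2C.
case: x; case: y => /=; by rewrite ?mulr1 ?mul1r ?mulr0 ?mul0r ?addr0 ?add0r ?mulrN ?mulNr ?opprK ?cici ?opprK.
Qed.

Lemma s0s0 x y : \sum_(z:bool) sigma0 R x z * sigma0 R z y = sigma0 R x y.
Proof.
rewrite !big_bool /sigma0 /b2C.
case: x; case: y => /=; by rewrite ?mulr1 ?mul1r ?mulr0 ?mul0r ?addr0 ?add0r.
Qed.

Lemma s0Fs0 (F : op1 R) x y : \sum_(z:bool) (\sum_(w:bool) sigma0 R x w * F w z) * sigma0 R z y = F x y.
Proof.
rewrite !big_bool /sigma0 /b2C.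
case: x; case: y => /=; by rewrite ?mulr1 ?mul1r ?mulr0 ?mul0r ?addr0 ?add0r.
Qed.
End C.

Section K.
Variable R : realType.
Local Notation C := (R[i]).
Variable n : nat.
Local Notation bv := {ffun 'I_n -> bool}.

Definition bits (i : 'I_(2 ^ n)) : bv := [ffun k : 'I_n => bit i k].

Lemma bits_inj : injective bits.
Proof.
move=> i j h; apply/val_inj/bit_inj_nat; try exact: ltn_ord.
move=> k hk; have := congr1 (fun f : bv => f (Ordinal hk)) h.
by rewrite !ffunE.
Qed.

Lemma bits_bij : bijective bits.
Proof.
apply: inj_card_bij; first exact: bits_inj.
by rewrite card_ffun card_bool !card_ord.
Qed.

Lemma sum_bits (F : bv -> C) : \sum_(m : 'I_(2 ^ n)) F (bits m) = \sum_(w : bv) F w.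
Proof. by rewrite (reindex bits) //; apply: onW_bij; exact: bits_bij. Qed.

Definition mxK (K : bv -> bv -> C) : 'M[C]_(2 ^ n) :=
  \matrix_(i, j) K (bits i) (bits j).

Lemma mxK_mul K1 K2 : mxK K1 *m mxK K2 = mxK (fun u v => \sum_w K1 u w * K2 w v).
Proof.
apply/matrixP => i j; rewrite !mxE.
under eq_bigr do rewrite !mxE.
exact: (sum_bits (fun w => K1 (bits i) w * K2 w (bits j))).
Qed.

Lemma mxK_ext K1 K2 : (forall u v, K1 u v = K2 u v) -> mxK K1 = mxK K2.
Proof. by move=> h; apply/matrixP => i j; rewrite !mxE h. Qed.

Lemma b2CE (b : bool) : b2C R b = b%:R.
Proof. by case: b. Qed.

Lemma mxK1 : 1%:M = mxK (fun u v => b2C R (u == v)).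
Proof.
apply/matrixP => i j; rewrite !mxE b2CE (inj_eq bits_inj).
by case: (i == j).
Qed.


Definition tensK (f : 'I_n -> op1 R) (u v : bv) : C := \prod_l f l (u l) (v l).

Lemma pauli_mxK p : pauli_mx R p = mxK (tensK (fun l => pauli_op R (p l))).
Proof.
apply/matrixP => i j; rewrite !mxE /tensK; apply: eq_bigr => l _.
by rewrite !ffunE.
Qed.

Lemma tens_mul f g u v : \sum_w tensK f u w * tensK g w v =
  tensK (fun l x y => \sum_(z : bool) f l x z * g l z y) u v.
Proof.
rewrite /tensK bigA_distr_bigA /=; apply: eq_bigr => w _.
by rewrite -big_split.
Qed.

Lemma b2C_and (x y : bool) : b2C R (x && y) = b2C R x * b2C R y.
Proof. by case: x; case: y; rewrite /= ?mul1r ?mul0r. Qed.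

Lemma prod_b2C (P : pred 'I_n) (c : pred 'I_n) :
  \prod_(l | P l) b2C R (c l) = b2C R [forall (l | P l), c l].
Proof.
rewrite -big_andE.
by rewrite (big_morph (b2C R) b2C_and (erefl (b2C R true))).
Qed.

Lemma embed1K k G : embed1 k G = mxK (tensK (fun l => if l == k then G else sigma0 R)).
Proof.
apply/matrixP => i j; rewrite !mxE /tensK (bigD1 k) //= eqxx.
rewrite (eq_bigr (fun l => b2C R (bits i l == bits j l))); last first.
  by move=> l /negbTE ->.
rewrite prod_b2C.
rewrite (_ : [forall l, _] = [forall (l | l != k), bits i l == bits j l]); last first.
  by apply: eq_forallb => l; rewrite !ffunE.
by case: [forall (l | l != k), bits i l == bits j l]; rewrite /= ?mulr1 ?mulr0 ?ffunE.
Qed.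

Lemma embed1K' k G : embed1 k G = mxK (fun u v =>
  if [forall l, (l != k) ==> (u l == v l)] then G (u k) (v k) else 0).
Proof.
apply/matrixP => i j; rewrite !mxE !ffunE.
rewrite (_ : [forall l, _] = [forall l, (l != k) ==> (bits i l == bits j l)]) //.
by apply: eq_forallb => l; rewrite !ffunE.
Qed.

Definition sig (a b : 'I_n) (fa fb : bool -> bool -> bool) (v : bv) : bv :=
  [ffun l => if l == a then fa (v a) (v b) else if l == b then fb (v a) (v b) else v l].

Lemma embed2K' a b G : embed2 a b G = mxK (fun u v =>
  if [forall l, (l != a) && (l != b) ==> (u l == v l)]
  then G (u a) (u b) (v a) (v b) else 0).
Proof.
apply/matrixP => i j; rewrite !mxE !ffunE.
rewrite (_ : [forall l, _] = [forall l, (l != a) && (l != b) ==> (bits i l == bits j l)]) //.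
by apply: eq_forallb => l; rewrite !ffunE.
Qed.

Lemma sig_eq a b fa fb (u v : bv) : a != b ->
  (u == sig a b fa fb v) = [forall l, (l != a) && (l != b) ==> (u l == v l)]
   && ((u a == fa (v a) (v b)) && (u b == fb (v a) (v b))).
Proof.
move=> ab; apply/idP/idP.
  move/eqP => ->; rewrite !ffunE eqxx (eq_sym b a) (negbTE ab) !eqxx !andbT.
  apply/forallP => l; apply/implyP => /andP [la lb].
  by rewrite ffunE (negbTE la) (negbTE lb).
case/andP => /forallP hf /andP [ha hb]; apply/eqP/ffunP => l; rewrite ffunE.
case: eqP => [->|/eqP la]; first exact/eqP.
case: eqP => [->|/eqP lb]; first exact/eqP.
by have /implyP := hf l; rewrite la lb => /(_ isT) /eqP.
Qed.

Lemma embed2K a b fa fb : a != b ->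
  embed2 a b (fun oa ob ia ib => b2C R ((oa == fa ia ib) && (ob == fb ia ib))) =
  mxK (fun u v => b2C R (u == sig a b fa fb v)).
Proof.
move=> ab; rewrite embed2K'; apply: mxK_ext => u v; rewrite sig_eq //.
by case: [forall l, (l != a) && (l != b) ==> (u l == v l)].
Qed.

Lemma sum_delta (F : bv -> C) x : \sum_w b2C R (w == x) * F w = F x.
Proof.
rewrite (bigD1 x) //= eqxx mul1r big1 ?addr0 //.
by move=> w /negbTE ->; rewrite mul0r.
Qed.

Lemma sum_deltar (F : bv -> C) x : \sum_w F w * b2C R (w == x) = F x.
Proof. by rewrite -[RHS](sum_delta F x); apply: eq_bigr => w _; rewrite mulrC. Qed.

Lemma conj_perm (s : bv -> bv) (T : bv -> bv -> C) : involutive s ->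
  mxK (fun u v => b2C R (u == s v)) *m mxK T *m mxK (fun u v => b2C R (u == s v))
  = mxK (fun u v => T (s u) (s v)).
Proof.
move=> invs; rewrite !mxK_mul; apply: mxK_ext => u v.
have E : forall x y, (x == s y) = (y == s x).
  by move=> x y; rewrite -(inj_eq (can_inj invs)) invs eq_sym.
have inner : forall w, \sum_w' b2C R (u == s w') * T w' w = T (s u) w.
  move=> w; rewrite -(sum_delta (fun w' => T w' w) (s u)).
  by apply: eq_bigr => w' _; rewrite E.
under eq_bigr do rewrite inner.
by rewrite sum_deltar.
Qed.


Lemma tensK1 : 1%:M = mxK (tensK (fun _ => sigma0 R)).
Proof.
rewrite mxK1; apply: mxK_ext => u v; rewrite /tensK /sigma0.
rewrite (prod_b2C predT (fun l => u l == v l)); congr b2C.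
apply/eqP/forallP => [->|h]; first by move=> x; rewrite eqxx implybT.
apply/ffunP => l; by have /implyP/(_ isT)/eqP := h l.
Qed.

Lemma conj1 k (A B : op1 R) (p q : 'I_n -> pauli) : (forall l, l != k -> q l = p l) ->
  (forall x y, \sum_(z:bool) (\sum_(w:bool) A x w * pauli_op R (q k) w z) * B z y
      = pauli_op R (p k) x y) ->
  embed1 k A *m pauli_mx R q *m embed1 k B = pauli_mx R p.
Proof.
move=> hq hk; rewrite !embed1K !pauli_mxK !mxK_mul; apply: mxK_ext => u v.
under eq_bigr do rewrite tens_mul.
rewrite tens_mul /tensK; apply: eq_bigr => l _.
case: (eqVneq l k) => [->|lk]; first exact: hk.
by rewrite s0Fs0 hq.
Qed.

Lemma unit1 (k : 'I_n) (A B : op1 R) :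
  (forall x y, \sum_(z:bool) A x z * B z y = sigma0 R x y) ->
  embed1 k A *m embed1 k B = 1%:M.
Proof.
move=> hk; rewrite !embed1K tensK1 !mxK_mul; apply: mxK_ext => u v.
rewrite tens_mul /tensK; apply: eq_bigr => l _.
case: (eqVneq l k) => [->|lk]; first exact: hk.
by rewrite s0s0.
Qed.

Lemma prod2 (a b : 'I_n) (F : 'I_n -> C) : a != b ->
  \prod_l F l = F a * F b * \prod_(l | (l != a) && (l != b)) F l.
Proof.
move=> ab; rewrite (bigD1 a) //= (bigD1 b) /=; last by rewrite eq_sym.
by rewrite mulrA.
Qed.

Lemma conj2 (a b : 'I_n) fa fb (p q : 'I_n -> pauli) : a != b -> involutive (sig a b fa fb) ->
  (forall l, l != a -> l != b -> q l = p l) ->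
  (forall x y z w, pauli_op R (q a) (fa x y) (fa z w) * pauli_op R (q b) (fb x y) (fb z w)
     = pauli_op R (p a) x z * pauli_op R (p b) y w) ->
  embed2 a b (fun oa ob ia ib => b2C R ((oa == fa ia ib) && (ob == fb ia ib)))
  *m pauli_mx R q *m
  embed2 a b (fun oa ob ia ib => b2C R ((oa == fa ia ib) && (ob == fb ia ib)))
  = pauli_mx R p.
Proof.
move=> ab inv hq hab; rewrite embed2K // !pauli_mxK conj_perm //.
apply: mxK_ext => u v; rewrite /tensK (prod2 _ ab) [RHS](prod2 _ ab).
rewrite !ffunE eqxx (eq_sym b a) (negbTE ab) eqxx hab; congr (_ * _).
apply: eq_bigr => l /andP [la lb].
by rewrite !ffunE (negbTE la) (negbTE lb) hq.
Qed.

Lemma unit2 (a b : 'I_n) fa fb : involutive (sig a b fa fb) -> a != b ->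
  embed2 a b (fun oa ob ia ib => b2C R ((oa == fa ia ib) && (ob == fb ia ib)))
  *m embed2 a b (fun oa ob ia ib => b2C R ((oa == fa ia ib) && (ob == fb ia ib)))
  = 1%:M.
Proof.
move=> inv ab; rewrite -[X in X *m _]mulmx1 embed2K // mxK1 conj_perm //.
apply: mxK_ext => u v.
by rewrite (inj_eq (can_inj inv)).
Qed.

Lemma sig_inv (a b : 'I_n) fa fb : a != b ->
  (forall x y, fa (fa x y) (fb x y) = x) -> (forall x y, fb (fa x y) (fb x y) = y) ->
  involutive (sig a b fa fb).
Proof.
move=> ab h1 h2 v; apply/ffunP => l.
rewrite !ffunE eqxx (eq_sym b a) (negbTE ab) eqxx h1 h2.
case: (eqVneq l a) => [->|la] //; case: (eqVneq l b) => [->|lb] //.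
Qed.

End K.

From mathcomp Require Import zify.

Section G.
Variable R : realType.
Variable n : nat.
Variable e : rel 'I_n.
Variable theta : R.

Lemma foldl_circ (c : seq (gate n)) (M : 'M[R[i]]_(2 ^ n)) :
  foldl (fun M g => gate_mx theta g *m M) M c = circuit_mx theta c *m M.
Proof.
rewrite /circuit_mx; elim: c M => [|g c IH] M /=; first by rewrite mul1mx.
by rewrite IH [in RHS]IH mulmx1 mulmxA.
Qed.

Lemma circ_cat (c1 c2 : seq (gate n)) : circuit_mx theta (c1 ++ c2) = circuit_mx theta c2 *m circuit_mx theta c1.
Proof. by rewrite {1}/circuit_mx foldl_cat foldl_circ. Qed.

Lemma circ1 (g : gate n) : circuit_mx theta [:: g] = gate_mx theta g.
Proof. by rewrite /circuit_mx /= mulmx1. Qed.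

Definition Reach (p q : 'I_n -> pauli) (h t : nat) : Prop :=
  exists U V : seq (gate n),
  [/\ all (gate_respects e) (U ++ V), count (@is_rot n) (U ++ V) = 0%N,
      (count (@is_HS n) (U ++ V) <= h)%N, (count (@is_2q n) (U ++ V) <= t)%N
    & circuit_mx theta V *m circuit_mx theta U = 1%:M /\ circuit_mx theta V *m pauli_mx R q *m circuit_mx theta U = pauli_mx R p].

Lemma Reach_refl (p : 'I_n -> pauli) : Reach p p 0 0.
Proof.
exists [::], [::]; split => //; split; rewrite /circuit_mx /= ?mulmx1 ?mul1mx //.
Qed.

Lemma Reach_ext (p q q' : 'I_n -> pauli) h t : (forall l, q l = q' l) -> Reach p q h t -> Reach p q' h t.
Proof.
move=> eq [U [V [h1 h2 h3 h4 [h5 h6]]]]; exists U, V; split => //; split => //.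
rewrite -h6; congr (_ *m _ *m _); apply/matrixP => i j; rewrite !mxE.
by apply: eq_bigr => l _; rewrite eq.
Qed.

Lemma Reach_mono (p q : 'I_n -> pauli) h t h' t' : (h <= h')%N -> (t <= t')%N -> Reach p q h t -> Reach p q h' t'.
Proof.
move=> hh ht [U [V [h1 h2 h3 h4 [h5 h6]]]]; exists U, V; split => //; lia.
Qed.

Lemma Reach_trans (p q w : 'I_n -> pauli) h1 t1 h2 t2 : Reach p q h1 t1 -> Reach q w h2 t2 -> Reach p w (h1 + h2) (t1 + t2).
Proof.
move=> [U1 [V1 [a1 b1 c1 d1 [e1 f1]]]] [U2 [V2 [a2 b2 c2 d2 [e2 f2]]]].
exists (U1 ++ U2), (V2 ++ V1); split.
- move: a1 a2; rewrite !all_cat => /andP [-> ->] /andP [-> ->] //.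
- move: b1 b2; rewrite !count_cat; lia.
- move: c1 c2; rewrite !count_cat; lia.
- move: d1 d2; rewrite !count_cat; lia.
- split; first by rewrite !circ_cat -mulmxA [circuit_mx theta V2 *m _]mulmxA e2 mul1mx.
  rewrite !circ_cat.
  by rewrite -f1 -f2 !mulmxA.
Qed.

Lemma Reach_one (g g' : gate n) (p q : 'I_n -> pauli) :
  gate_respects e g -> gate_respects e g' -> ~~ is_rot g -> ~~ is_rot g' ->
  gate_mx theta g' *m gate_mx theta g = 1%:M ->
  gate_mx theta g' *m pauli_mx R q *m gate_mx theta g = pauli_mx R p ->
  Reach p q (is_HS g + is_HS g') (is_2q g + is_2q g').
Proof.
move=> r1 r2 n1 n2 u c; exists [:: g], [:: g']; rewrite !circ1; split => //=.
all: rewrite ?r1 ?r2 ?(negbTE n1) ?(negbTE n2) ?addn0 //.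
Qed.

Definition upd (p : 'I_n -> pauli) (k : 'I_n) (x : pauli) : 'I_n -> pauli :=
  fun l => if l == k then x else p l.

Lemma stepZ p k : p k = PZ -> Reach p (upd p k PX) 2 0.
Proof.
move=> pk; apply: (Reach_one (g := GH k) (g' := GH k)) => //=.
  by apply: unit1; exact: HH.
apply: conj1 => [l lk|x y]; first by rewrite /upd (negbTE lk).
by rewrite /upd eqxx pk; exact: HXH.
Qed.

Lemma stepY p k : p k = PY -> Reach p (upd p k PX) 2 0.
Proof.
move=> pk; apply: (Reach_one (g := GSdg k) (g' := GS k)) => //=.
  by apply: unit1; exact: SSdg.
apply: conj1 => [l lk|x y]; first by rewrite /upd (negbTE lk).
by rewrite /upd eqxx pk; exact: SXSdg.
Qed.

Lemma stepCNOT p c t : e c t -> c != t -> p c = PX -> p t = PX ->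
  Reach p (upd p t PI) 0 2.
Proof.
move=> ect ct pc pt; apply: (Reach_one (g := GCNOT c t) (g' := GCNOT c t)) => //=.
  apply: (@unit2 R n c t (fun x _ => x) (fun x y => y (+) x)) => //.
  by apply: sig_inv => // x y; rewrite addbK.
apply: (@conj2 R n c t (fun x _ => x) (fun x y => y (+) x)) => //.
- by apply: sig_inv => // x y; rewrite addbK.
- by move=> l lc lt; rewrite /upd (negbTE lt).
- move=> x y z w; rewrite /upd eqxx (negbTE ct) pc pt /= /sigmax /sigma0 /b2C.
  by case: x; case: y; case: z; case: w; rewrite /= ?mulr1 ?mulr0.
Qed.

Lemma stepSWAP p a b : e a b -> a != b -> p a = PX -> p b = PI ->
  Reach p (upd (upd p a PI) b PX) 0 2.
Proof.
move=> eab ab pa pb; apply: (Reach_one (g := GSWAP a b) (g' := GSWAP a b)) => //=.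
  apply: (@unit2 R n a b (fun _ y => y) (fun x _ => x)) => //.
  by apply: sig_inv.
apply: (@conj2 R n a b (fun _ y => y) (fun x _ => x)) => //.
- by apply: sig_inv.
- by move=> l la lb; rewrite /upd (negbTE la) (negbTE lb).
- move=> x y z w; rewrite /upd eqxx (negbTE ab) eqxx pa pb.
  by rewrite mulrC.
Qed.

Lemma phase1 (s : seq 'I_n) (p : 'I_n -> pauli) :
  Reach p (fun l => if (l \in s) && (p l != PI) then PX else p l) (2 * size s) 0.
Proof.
elim: s p => [|k s IH] p.
  by apply: (Reach_ext (q := p)) => //; exact: Reach_refl.
pose p' := fun l => if (l == k) && (p l != PI) then PX else p l.
have st : Reach p p' 2 0.
  case pk: (p k).
  - apply: (Reach_mono (h := 0) (t := 0)) => //.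
    apply: (Reach_ext (q := p)); last exact: Reach_refl.
    by move=> l; rewrite /p'; case: eqP => [->|] //=; rewrite pk.
  - apply: (Reach_mono (h := 0) (t := 0)) => //.
    apply: (Reach_ext (q := p)); last exact: Reach_refl.
    by move=> l; rewrite /p'; case: eqP => [->|] //=; rewrite pk.
  - apply: (Reach_ext (q := upd p k PX)); last exact: stepY.
    by move=> l; rewrite /p' /upd; case: eqP => [->|] //=; rewrite pk.
  - apply: (Reach_ext (q := upd p k PX)); last exact: stepZ.
    by move=> l; rewrite /p' /upd; case: eqP => [->|] //=; rewrite pk.
have := Reach_trans st (IH p').
move=> h; apply: (Reach_mono (h := 2 + 2 * size s) (t := 0 + 0)) => //.
  by rewrite /= mulnS.
apply: (Reach_ext _ h) => l; rewrite /p' in_cons.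
case: (eqVneq l k) => [->|lk] /=; case: (p k) => //=; try by rewrite andbF.
all: try by case: (k \in s).
Qed.

End G.

Section P2.
Variable R : realType.
Variable n : nat.
Variable e : rel 'I_n.
Variable theta : R.
Hypothesis e_sym : symmetric e.
Hypothesis e_irr : irreflexive e.
Variable r : 'I_n.
Variable d : 'I_n -> nat.
Hypothesis hd0 : forall v, (d v == 0%N) = (v == r).
Hypothesis hpar : forall v, v != r -> exists2 u, e v u & (d u < d v)%N.

Definition IX (q : 'I_n -> pauli) := forall l, q l = PI \/ q l = PX.

Lemma inner k (s : seq 'I_n) : (forall v, v \in s -> d v = k.+1) ->
  forall q, IX q -> nonidentity_pauli q ->
  (forall v, q v != PI -> (d v <= k)%N || (v \in s)) ->
  exists2 q', [/\ IX q', nonidentity_pauli q' & forall v, q' v != PI -> (d v <= k)%N]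
    & Reach e theta q q' 0 (2 * size s).
Proof.
elim: s => [|v s IH] hs q hIX hn hsup.
  exists q; last exact: Reach_refl.
  by split => // w /hsup; rewrite orbF.
have hs' : forall w, w \in s -> d w = k.+1 by move=> w ws; apply: hs; rewrite in_cons ws orbT.
case: (hIX v) => hqv.
  have hsup' : forall w, q w != PI -> (d w <= k)%N || (w \in s).
    move=> w hw; move: (hsup w hw); rewrite in_cons; case: (eqVneq w v) => [wv|] //=.
    by move: hw; rewrite wv hqv.
  have [q' H1 H2] := IH hs' q hIX hn hsup'.
  by exists q' => //; apply: (Reach_mono (h := 0) (t := 2 * size s)) => //=; lia.
have dv : d v = k.+1 by apply: hs; rewrite in_cons eqxx.
have vr : v != r by rewrite -hd0 dv.
have [u evu du] := hpar vr.
have uv : u != v by apply/eqP => uv; move: evu; rewrite uv e_irr.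
have duk : (d u <= k)%N by rewrite -ltnS -dv.
pose supp_ok q'' := forall w, q'' w != PI -> (d w <= k)%N || (w \in s).
have [q'' st [IX'' hn'' hsup'']] : exists2 q'', Reach e theta q q'' 0 2 &
    [/\ IX q'', nonidentity_pauli q'' & supp_ok q''].
  case: (hIX u) => hqu.
  - exists (upd (upd q v PI) u PX).
      by apply: stepSWAP => //; rewrite eq_sym.
    split.
    + by move=> l; rewrite /upd; case: (l == u); case: (l == v); auto.
    + by exists u; rewrite /upd eqxx.
    + move=> w; rewrite /upd; case: (eqVneq w u) => [->|wu]; first by rewrite duk.
      case: (eqVneq w v) => [//|wv] hw.
      by move: (hsup w hw); rewrite in_cons (negbTE wv).
  - exists (upd q v PI).
      by apply: (@stepCNOT R n e theta q u v) => //; rewrite e_sym.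
    split.
    + by move=> l; rewrite /upd; case: (l == v); auto.
    + by exists u; rewrite /upd (negbTE uv) hqu.
    + move=> w; rewrite /upd; case: (eqVneq w v) => [//|wv] hw.
      by move: (hsup w hw); rewrite in_cons (negbTE wv).
have [q' H1 H2] := IH hs' q'' IX'' hn'' hsup''.
exists q' => //.
have := Reach_trans st H2.
by apply: Reach_mono => //=; lia.
Qed.

Definition Xat (k : 'I_n) : 'I_n -> pauli := fun l => if l == k then PX else PI.

Lemma card_level k : #|[set v | (0 < d v <= k.+1)%N]| =
  (#|[set v | d v == k.+1]| + #|[set v | (0 < d v <= k)%N]|)%N.
Proof.
rewrite -(cardsID [set v | d v == k.+1] [set v | (0 < d v <= k.+1)%N]).
f_equal; apply: eq_card => v; rewrite !inE; apply/idP/idP; lia.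
Qed.

Lemma levels k : forall q, IX q -> nonidentity_pauli q ->
  (forall v, q v != PI -> (d v <= k)%N) ->
  Reach e theta q (Xat r) 0 (2 * #|[set v | (0 < d v <= k)%N]|).
Proof.
elim: k => [|k IH] q hIX hn hsup.
  apply: (Reach_mono (h := 0) (t := 0)) => //.
  apply: (Reach_ext (q := q)); last exact: Reach_refl.
  move=> l; rewrite /Xat; case: (eqVneq l r) => [->|lr].
    case: hn => l0 hl0; have := hsup _ hl0; rewrite leqn0 hd0 => /eqP rl0.
    by move: hl0; rewrite -rl0; case: (hIX l0) => ->.
  case: (hIX l) => // hl; have := hsup l; rewrite hl leqn0 hd0 (negbTE lr).
  by move/(_ isT).
set A := [set v | d v == k.+1].
have hs : forall v, v \in enum A -> d v = k.+1 by move=> v; rewrite mem_enum inE => /eqP.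
have hsup' : forall v, q v != PI -> (d v <= k)%N || (v \in enum A).
  move=> v hv; rewrite mem_enum inE; have := hsup v hv; rewrite leq_eqVlt ltnS.
  by rewrite orbC.
have [q' [IX' hn' hsup''] st] := inner hs hIX hn hsup'.
have := Reach_trans st (IH q' IX' hn' hsup'').
apply: Reach_mono => //; by rewrite card_level -cardE -/A mulnDr.
Qed.

End P2.

Lemma eq_split n (k : 'I_n) (u v : {ffun 'I_n -> bool}) :
  (u == v) = [forall l, (l != k) ==> (u l == v l)] && (u k == v k).
Proof.
apply/eqP/andP => [->|[/forallP h /eqP hk]].
  by split => //; apply/forallP => l; rewrite eqxx implybT.
apply/ffunP => l; case: (eqVneq l k) => [->//|lk].
by have /implyP/(_ lk)/eqP := h l.
Qed.

Lemma rotK (R : realType) n (k : 'I_n) (theta : R) :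
  embed1 k (rotx theta) = exp_pauli theta (pauli_mx R (Xat k)).
Proof.
have -> : pauli_mx R (Xat k) = embed1 k (sigmax R).
  rewrite pauli_mxK embed1K; apply: mxK_ext => u v; rewrite /tensK.
  by apply: eq_bigr => l _; rewrite /Xat; case: (l == k).
rewrite /exp_pauli mxK1 !embed1K'; apply/matrixP => i j; rewrite !mxE.
rewrite (eq_split k).
case: [forall l, (l != k) ==> (bits i l == bits j l)] => /=;
  rewrite /rotx /sigmax /b2C; case: (bits i k == bits j k) => /=;
  by rewrite ?mulr1 ?mulr0 ?addr0 ?add0r.
Qed.

Fixpoint reach n (e : rel 'I_n) (r : 'I_n) (m : nat) (x : 'I_n) : bool :=
  if m is m'.+1 then (x == r) || [exists u, e x u && reach e r m' u] else x == r.

Lemma reach_path n (e : rel 'I_n) r (p : seq 'I_n) x :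
  path e x p -> last x p = r -> reach e r (size p) x.
Proof.
elim: p x => [|y p IH] x /=; first by move=> _ ->; rewrite eqxx.
move=> /andP [exy pp] hl; apply/orP; right; apply/existsP; exists y.
by rewrite exy IH.
Qed.

Unset Implicit Arguments.
Set Strict Implicit.

Theorem proposition3p5 (R : realType) (n : nat) (e : rel 'I_n)
    (e_sym : symmetric e) (e_irr : irreflexive e)
    (e_conn : forall x y : 'I_n, connect e x y)
    (p : 'I_n -> pauli) (hp : nonidentity_pauli p) (theta : R) :
  exists c : seq (gate n),
    [/\ all (gate_respects e) c,
        count (@is_rot n) c = 1%N,
        (count (@is_HS n) c <= 2 * n)%N,
        (count (@is_2q n) c <= 2 * n - 2)%N
      & circuit_mx theta c = exp_pauli theta (pauli_mx R p)].
Proof.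
have [r hr] := hp.
have ex : forall x, exists m, reach e r m x.
  move=> x; have /connectP [q pq lq] := e_conn x r.
  by exists (size q); apply: reach_path => //; rewrite -lq.
pose d x := ex_minn (ex x).
have hd0 : forall v, (d v == 0%N) = (v == r).
  move=> v; rewrite /d; case: ex_minnP => m Pm mmin.
  apply/idP/idP => [/eqP m0|/eqP vr]; first by move: Pm; rewrite m0.
  by have := mmin 0%N; rewrite /= vr eqxx => /(_ isT); rewrite leqn0.
have hpar : forall v, v != r -> exists2 u, e v u & (d u < d v)%N.
  move=> v vr; rewrite {2}/d; case: ex_minnP => m Pm mmin.
  case: m Pm mmin => [|m] /=; first by rewrite (negbTE vr).
  rewrite (negbTE vr) /= => /existsP [u /andP [evu ru]] _.
  exists u => //; rewrite /d; case: ex_minnP => m' _ /(_ m ru).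
  by rewrite ltnS.
have h1 := phase1 e theta (enum 'I_n) p.
pose p1 := fun l => if p l != PI then PX else p l.
have h1' : Reach e theta p p1 (2 * n) 0.
  rewrite size_enum_ord in h1; apply: (Reach_ext _ h1) => l.
  by rewrite mem_enum.
have IX1 : IX p1 by move=> l; rewrite /p1; case: (p l); auto.
have nid1 : nonidentity_pauli p1 by exists r; rewrite /p1 hr.
pose K := \max_v d v.
have supp1 : forall v, p1 v != PI -> (d v <= K)%N by move=> v _; exact: leq_bigmax.
have h2 := levels theta e_sym e_irr hd0 hpar IX1 nid1 supp1.
have [U [V [ra rb rc rd [re rf]]]] := Reach_trans h1' h2.
exists (U ++ GRx r :: V); split.
- move: ra; rewrite !all_cat /= => /andP [-> ->] //.
- move: rb; rewrite !count_cat /=; lia.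
- move: rc; rewrite !count_cat /=; lia.
- have cardK : (#|[set v | (0 < d v <= K)%N]| <= n.-1)%N.
    have : [set v | (0 < d v <= K)%N] \subset [set~ r].
      apply/subsetP => v; rewrite !inE => /andP [dv _].
      by rewrite -hd0 -lt0n.
    by move/subset_leq_card; rewrite cardsC1 card_ord.
  move: rd cardK; rewrite !count_cat /=; generalize #|[set v | (0 < d v <= K)%N]| => c; lia.
- rewrite (circ_cat theta U) -cat1s circ_cat circ1 /= rotK /exp_pauli.
  rewrite mulmxDr mulmxDl -!scalemxAr -!scalemxAl mulmx1 re.
  rewrite -(mulmxA (circuit_mx theta V)) .
  by rewrite [circuit_mx theta V *m (pauli_mx R _ *m _)]mulmxA rf.
Qed.
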